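(* Let $n\ge1$, let $a_1,\dots,a_n$ be distinct real numbers and $F(a)=\prod_{i=1}^n(a-a_i)$. Fix $\epsilon_i\in\{\pm1\}$, put $\Delta_i=\epsilon_i(a-a_i)$ and work on an open interval where all $\Delta_i>0$. For arbitrary real $\xi_1,\dots,\xi_n$, the function $x=\sum_{i=1}^n\xi_i\Delta_i^{-1/2}$ satisfies $$\mathrm{Op}_n[F]\,x=\sum_{i=1}^n\xi_i\frac{\Delta_i^{1/2}}{n!}\,D_a^n\Big(\frac{F}{\Delta_i}\Big),$$ which vanishes; consequently $x=\sum_{i}\xi_i\Delta_i^{-1/2}$ is the general solution of the ODE $\mathrm{Op}_n[F]x=0$.
   Context: $D_a=d/da$, $F^{(m)}=D_a^mF$; Pochhammer symbol $(z)_0=1$, $(z)_s=z(z+1)\cdots(z+s-1)$; $\mathrm{Op}_n[F]=\sum_{s=0}^n\frac{F^{(n-s)}}{(n-s)!}\frac{1}{(1/2)_s}D_a^s$. *)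

(* Defs.v *)
From Stdlib Require Import Reals Lra Lia.
From Coquelicot Require Import Coquelicot.
Open Scope R_scope.

Fixpoint rsum (n : nat) (f : nat -> R) : R :=
  match n with O => 0 | S m => rsum m f + f m end.

Fixpoint rprod (n : nat) (f : nat -> R) : R :=
  match n with O => 1 | S m => rprod m f * f m end.

Fixpoint poch (z : R) (s : nat) : R :=
  match s with O => 1 | S m => poch z m * (z + INR m) end.

(* F(a) = prod_{i=1}^n (a - a_i), with the a_i indexed 0..n-1 *)
Definition Fpoly (n : nat) (a : nat -> R) (t : R) : R :=
  rprod n (fun i => t - a i).

Definition Dlt (eps a : nat -> R) (i : nat) (t : R) : R :=
  eps i * (t - a i).

Definition Op (n : nat) (F x : R -> R) (t : R) : R :=
  rsum (S n) (fun s =>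
    Derive_n F (n - s) t / INR (Factorial.fact (n - s)) * / poch (1/2) s * Derive_n x s t).

Definition in_ival (l r : Rbar) (t : R) : Prop := Rbar_lt l t /\ Rbar_lt t r.

(* Main.v *)
Require Import Defs.
From Stdlib Require Import Reals Lra Lia FunctionalExtensionality.
From Coquelicot Require Import Coquelicot.
Open Scope R_scope.


Lemma rsum_ext n f g : (forall i, (i < n)%nat -> f i = g i) -> rsum n f = rsum n g.
Proof. induction n; simpl; intros H; auto. rewrite IHn by (intros; apply H; lia). rewrite H by lia; auto. Qed.

Lemma rsum_plus n f g : rsum n (fun i => f i + g i) = rsum n f + rsum n g.
Proof. induction n; simpl; [lra|]. rewrite IHn; lra. Qed.

Lemma rsum_scal n c f : rsum n (fun i => c * f i) = c * rsum n f.
Proof. induction n; simpl; [lra|]. rewrite IHn; lra. Qed.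

Lemma rsum_zero n f : (forall i, (i < n)%nat -> f i = 0) -> rsum n f = 0.
Proof. intros H. rewrite (rsum_ext n f (fun _ => 0)) by auto. clear H; induction n; simpl; auto; rewrite IHn; lra. Qed.

Lemma rsum_shift n f : rsum (S n) f = f 0%nat + rsum n (fun k => f (S k)).
Proof. induction n; simpl in *; [lra|]. rewrite IHn; lra. Qed.

Lemma rsum_rev n f : rsum (S n) f = rsum (S n) (fun s => f (n - s)%nat).
Proof.
  induction n. simpl; auto.
  rewrite (rsum_shift (S n) (fun s => f (S n - s)%nat)).
  change (rsum (S (S n)) f) with (rsum (S n) f + f (S n)).
  rewrite IHn. replace (S n - 0)%nat with (S n) by lia. simpl (S n - S _)%nat. lra.
Qed.

Lemma rsum_swap n m (f : nat -> nat -> R) :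
  rsum n (fun s => rsum m (fun i => f s i)) = rsum m (fun i => rsum n (fun s => f s i)).
Proof.
  induction n; simpl. symmetry; apply rsum_zero; auto.
  rewrite IHn, <- rsum_plus. auto.
Qed.

Lemma rsum_nonneg n f : (forall i, (i < n)%nat -> 0 <= f i) -> 0 <= rsum n f.
Proof. induction n; simpl; intros; [lra|]. assert (0 <= f n) by (apply H; lia).
  assert (0 <= rsum n f) by (apply IHn; intros; apply H; lia). lra. Qed.

Lemma rsum_le n f g : (forall i, (i < n)%nat -> f i <= g i) -> rsum n f <= rsum n g.
Proof. induction n; simpl; intros; [lra|]. assert (f n <= g n) by (apply H; lia).
  assert (rsum n f <= rsum n g) by (apply IHn; intros; apply H; lia). lra. Qed.

Lemma rsum_term n f j : (forall i, (i < n)%nat -> 0 <= f i) -> (j < n)%nat -> f j <= rsum n f.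
Proof. induction n; simpl; intros H Hj; [lia|].
  assert (0 <= rsum n f) by (apply rsum_nonneg; intros; apply H; lia).
  destruct (Nat.eq_dec j n). subst; lra.
  assert (f j <= rsum n f) by (apply IHn; [intros; apply H; lia| lia]). assert (0 <= f n) by (apply H; lia). lra. Qed.

Lemma rsum_abs n f : Rabs (rsum n f) <= rsum n (fun i => Rabs (f i)).
Proof. induction n; simpl. rewrite Rabs_R0; lra.
  eapply Rle_trans. apply Rabs_triang. lra. Qed.

Lemma rprod_nz n f : (forall i, (i < n)%nat -> f i <> 0) -> rprod n f <> 0.
Proof. induction n; simpl; intros H. lra. apply Rmult_integral_contrapositive; split. apply IHn; intros; apply H; lia. apply H; lia. Qed.

Lemma rprod_zero n f j : (j < n)%nat -> f j = 0 -> rprod n f = 0.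
Proof. induction n; simpl; intros Hj Hf; [lia|]. destruct (Nat.eq_dec j n). subst; rewrite Hf; ring.
  rewrite IHn; auto; [ring|lia]. Qed.

Lemma rprod_ext n f g : (forall i, (i < n)%nat -> f i = g i) -> rprod n f = rprod n g.
Proof. induction n; simpl; intros H; auto. rewrite IHn by (intros; apply H; lia). rewrite H by lia; auto. Qed.

Lemma rprod_pick n f i : (i < n)%nat ->
  rprod n f = rprod n (fun j => if Nat.eqb j i then 1 else f j) * f i.
Proof.
  induction n; simpl; intros Hi; [lia|].
  destruct (Nat.eq_dec i n).
  - subst. rewrite Nat.eqb_refl. rewrite (rprod_ext n (fun j => if Nat.eqb j n then 1 else f j) f). ring.
    intros j Hj. destruct (Nat.eqb_spec j n); [lia|auto].
  - rewrite IHn by lia. destruct (Nat.eqb_spec n i); [lia|]. ring.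
Qed.

Definition Sm (f : R -> R) := forall k t, ex_derive (Derive_n f k) t.

Lemma Sm_isd f k t : Sm f -> is_derive (Derive_n f k) t (Derive_n f (S k) t).
Proof. intros H. apply Derive_correct, H. Qed.

Lemma isd_eq (f : R -> R) (x l l' : R) : is_derive f x l -> l = l' -> is_derive f x l'.
Proof. intros H ->; auto. Qed.

Lemma leib_isd f al be k t : Sm f ->
  is_derive (fun u => Derive_n f k u * (al * u + be) + INR k * al * Derive_n f (pred k) u) t
    (Derive_n f (S k) t * (al * t + be) + INR (S k) * al * Derive_n f k t).
Proof.
  intros Hf.
    eapply isd_eq.
    + apply @is_derive_plus.
      * apply (is_derive_mult (Derive_n f k) (fun u => al * u + be)). apply Sm_isd; auto.
        auto_derive; auto. intros; apply Rmult_comm.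
      * apply is_derive_scal. apply Sm_isd; auto.
    + destruct k; simpl pred; simpl Derive_n; rewrite ?S_INR; simpl INR;
      unfold plus, mult; simpl; ring.
Qed.

Lemma leib_formula f h al be : Sm f -> (forall u, h u = f u * (al * u + be)) ->
  forall k t, Derive_n h k t = Derive_n f k t * (al * t + be) + INR k * al * Derive_n f (pred k) t.
Proof.
  intros Hf Hh k. induction k; intros t.
  - simpl. rewrite Hh. ring.
  - simpl Derive_n at 1.
    rewrite (Derive_ext _ _ _ IHk).
    apply is_derive_unique. apply leib_isd; auto.
Qed.

Lemma leib_Sm f h al be : Sm f -> (forall u, h u = f u * (al * u + be)) -> Sm h.
Proof.
  intros Hf Hh k t.
  eapply ex_derive_ext. intros u. symmetry. apply (leib_formula f h al be Hf Hh).
  eexists. apply leib_isd; auto.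
Qed.

Lemma Sm_const c : Sm (fun _ => c).
Proof. intros k t. destruct k. simpl. auto_derive; auto.
  eapply ex_derive_ext. intros u. symmetry. apply Derive_n_const. auto_derive; auto. Qed.

Lemma Fpoly_S m a u : Fpoly (S m) a u = Fpoly m a u * (1 * u + - a m).
Proof. unfold Fpoly; simpl. ring. Qed.

Lemma Fpoly_Sm m a : Sm (Fpoly m a) /\ forall k t, (m < k)%nat -> Derive_n (Fpoly m a) k t = 0.
Proof.
  induction m.
  - split. unfold Fpoly; simpl. apply Sm_const.
    intros k t Hk. destruct k; [lia|]. unfold Fpoly; simpl rprod. apply Derive_n_const.
  - destruct IHm as [H1 H2]. split.
    + eapply leib_Sm; [apply H1| apply Fpoly_S].
    + intros k t Hk. rewrite (leib_formula _ _ _ _ H1 (Fpoly_S m a)).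
      rewrite !H2 by lia. ring.
Qed.

Lemma Fpoly_taylor m a : forall t h,
  rsum (S m) (fun k => Derive_n (Fpoly m a) k t / INR (Factorial.fact k) * h ^ k) = Fpoly m a (t + h).
Proof.
  induction m; intros t h.
  - simpl. unfold Fpoly; simpl. field.
  - destruct (Fpoly_Sm m a) as [H1 H2].
    rewrite Fpoly_S.
    rewrite (rsum_ext _ _ (fun k => (1 * t + - a m) * (Derive_n (Fpoly m a) k t / INR (Factorial.fact k) * h ^ k)
        + (if k then 0 else h * (Derive_n (Fpoly m a) (pred k) t / INR (Factorial.fact (pred k)) * h ^ (pred k))))).
    2:{ intros k Hk. rewrite (leib_formula _ _ _ _ H1 (Fpoly_S m a)). destruct k.
        simpl. field. simpl pred. rewrite fact_simpl. rewrite mult_INR. simpl pow.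
        field. split. apply INR_fact_neq_0. rewrite S_INR. pose proof (pos_INR k). lra. }
    rewrite rsum_plus, rsum_scal. rewrite <- IHm.
    change (rsum (S (S m)) ?g) with (rsum (S m) g + g (S m)) at 1.
    rewrite (rsum_shift (S m) (fun k => if k then _ else _)).
    simpl pred. rewrite rsum_scal.
    rewrite H2 by lia. unfold Rdiv. ring.
Qed.

Definition Gi (m : nat) (a : nat -> R) (i : nat) (u : R) :=
  rprod m (fun j => if Nat.eqb j i then 1 else u - a j).

Lemma Gi_Sm m a i : Sm (Gi m a i) /\
  forall k t, (m - (if Nat.ltb i m then 1 else 0) < k)%nat -> Derive_n (Gi m a i) k t = 0.
Proof.
  induction m.
  - split. unfold Gi; simpl. apply Sm_const.
    intros k t Hk. destruct k; [simpl in Hk; lia|]. unfold Gi; simpl rprod. apply Derive_n_const.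
  - destruct IHm as [H1 H2].
    destruct (Nat.eqb_spec m i).
    + subst m.
      assert (HG : forall u, Gi (S i) a i u = Gi i a i u * (0 * u + 1)).
      { intros u; unfold Gi; simpl. rewrite Nat.eqb_refl. ring. }
      split. eapply leib_Sm; [apply H1|apply HG].
      intros k t Hk. rewrite (leib_formula _ _ _ _ H1 HG).
      rewrite H2. ring. destruct (Nat.ltb_spec i i); [lia|].
      destruct (Nat.ltb_spec i (S i)); lia.
    + assert (HG : forall u, Gi (S m) a i u = Gi m a i u * (1 * u + - a m)).
      { intros u; unfold Gi; simpl. destruct (Nat.eqb_spec m i); [lia|]. ring. }
      split. eapply leib_Sm; [apply H1|apply HG].
      intros k t Hk. rewrite (leib_formula _ _ _ _ H1 HG).
      destruct (Nat.ltb_spec i (S m)); destruct (Nat.ltb_spec i m); try lia.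
      * rewrite !H2; [ring| |]; destruct (Nat.ltb_spec i m); lia.
      * rewrite !H2; [ring| |]; destruct (Nat.ltb_spec i m); lia.
Qed.

Lemma Gi_high n a i k t : (i < n)%nat -> (n <= k)%nat -> Derive_n (Gi n a i) k t = 0.
Proof. intros Hi Hk. apply (proj2 (Gi_Sm n a i)). destruct (Nat.ltb_spec i n); lia. Qed.

Lemma Fpoly_Gi n a i u : (i < n)%nat -> Fpoly n a u = Gi n a i u * (u - a i).
Proof. intros Hi. unfold Fpoly, Gi. rewrite (rprod_pick n _ i Hi). apply Rmult_eq_compat_r.
  apply rprod_ext. intros j _. destruct (Nat.eqb j i); auto. Qed.

Lemma poch_pos s : 0 < poch (1/2) s.
Proof. induction s; simpl. lra. pose proof (pos_INR s). apply Rmult_lt_0_compat; lra. Qed.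

Definition gf (e c : R) (s : nat) (u : R) :=
  poch (1/2) s * (-e) ^ s / (sqrt (e * (u - c)) * (e * (u - c)) ^ s).

Lemma gf_isd e c s u : e * e = 1 -> 0 < e * (u - c) -> is_derive (gf e c s) u (gf e c (S s) u).
Proof.
  intros He Hp. unfold gf.
  set (D := e * (u - c)).
  assert (HD : is_derive (fun v => e * (v - c)) u e).
  { auto_derive; auto. ring. }
  assert (Hs : 0 < sqrt D) by (apply sqrt_lt_R0; auto).
  assert (HDs : 0 < D ^ s) by (apply pow_lt; auto).
  eapply isd_eq.
  - apply (is_derive_scal (fun v => / (sqrt (e * (v - c)) * (e * (v - c)) ^ s))).
    apply is_derive_inv.
    + apply (is_derive_mult (fun v => sqrt (e * (v - c))) (fun v => (e * (v - c)) ^ s)).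
      * apply (is_derive_sqrt (fun v => e * (v - c))). exact HD. exact Hp.
      * apply (is_derive_pow (fun v => e * (v - c))). exact HD.
      * exact Rmult_comm.
    + apply Rgt_not_eq. apply Rmult_lt_0_compat; assumption.
  - unfold plus, mult; simpl. change (e * (u - c)) with D.
    assert (HsD : sqrt D * sqrt D = D) by (apply sqrt_sqrt; unfold D; lra).
    set (q := sqrt D) in *. clearbody q. clearbody D. subst D.
    destruct s.
    + simpl. field. lra.
    + simpl pred. change ((q*q)^S s) with (q*q*(q*q)^s). rewrite S_INR.
      assert (0 < (q*q)^s) by (apply pow_lt; nra).
      set (P := (q*q)^s) in *. set (W := poch (1/2) (S s)). set (V := (-e)^S s).
      field. lra.
Qed.

Lemma core n a i e t : (i < n)%nat -> e * e = 1 -> 0 < e * (t - a i) ->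
  rsum (S n) (fun s => Derive_n (Fpoly n a) (n - s) t / INR (Factorial.fact (n - s))
     * / poch (1/2) s * gf e (a i) s t) = 0.
Proof.
  intros Hi He Hp.
  set (D := e * (t - a i)) in *.
  set (T := fun k => Derive_n (Fpoly n a) k t / INR (Factorial.fact k) * (- e * D) ^ k).
  set (K := (-e)^n / (D^n * sqrt D)).
  assert (Hs : 0 < sqrt D) by (apply sqrt_lt_R0; auto).
  rewrite (rsum_ext _ _ (fun s => K * T (n - s)%nat)).
  2:{ intros s Hsn. unfold T, K, gf. fold D.
      assert (Hn : n = ((n - s) + s)%nat) by lia.
      set (k := (n - s)%nat) in *. clearbody k.
      replace ((-e)^n) with ((-e)^k * (-e)^s) by (rewrite Hn, pow_add; auto).
      replace (D^n) with (D^k * D^s) by (rewrite Hn, pow_add; auto).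
      rewrite Rpow_mult_distr.
      assert (H1 : (-e)^k * (-e)^k = 1).
      { rewrite <- Rpow_mult_distr. replace (-e * -e) with 1 by lra. apply pow1. }
      assert (0 < poch (1/2) s) by apply poch_pos.
      assert (0 < D ^ k) by (apply pow_lt; auto).
      assert (0 < D ^ s) by (apply pow_lt; auto).
      assert (0 < INR (Factorial.fact k)) by (apply INR_fact_lt_0).
      set (P := (-e)^k) in *. set (Q := (-e)^s).
      set (X := Derive_n (Fpoly n a) k t).
      transitivity (X / INR (Factorial.fact k) * Q / (sqrt D * D ^ s) * (P * P)).
      rewrite H1. field. repeat split; lra.
      field. repeat split; lra. }
  rewrite rsum_scal. rewrite <- (rsum_rev n T). unfold T. rewrite Fpoly_taylor.
  replace (t + - e * D) with (a i) by (unfold D; replace (- e * (e * (t - a i))) with (-(e*e)*(t - a i)) by ring; rewrite He; ring).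
  unfold Fpoly. rewrite (rprod_zero n _ i Hi); [ring|ring].
Qed.

Lemma vander m : forall (w u : nat -> R),
  (forall i j, (i < m)%nat -> (j < m)%nat -> i <> j -> w i <> w j) ->
  exists eta, forall k, (k < m)%nat -> rsum m (fun i => eta i * w i ^ k) = u k.
Proof.
  induction m; intros w u Hw.
  - exists (fun _ => 0). intros; lia.
  - destruct (IHm w (fun k => u (S k) - w m * u k)) as [e' He'].
    { intros; apply Hw; lia. }
    set (eta := fun i => if Nat.ltb i m then e' i / (w i - w m)
                         else u 0%nat - rsum m (fun j => e' j / (w j - w m))).
    exists eta.
    assert (Hlt : forall i, (i < m)%nat -> eta i = e' i / (w i - w m)).
    { intros i Hi. unfold eta. destruct (Nat.ltb_spec i m); [auto|lia]. }
    assert (Hm : eta m = u 0%nat - rsum m (fun j => e' j / (w j - w m))).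
    { unfold eta. destruct (Nat.ltb_spec m m); [lia|auto]. }
    intros k Hk. induction k.
    + simpl. rewrite Hm. rewrite (rsum_ext m _ (fun j => e' j / (w j - w m))). ring.
      intros i Hi. rewrite Hlt by auto. ring.
    + assert (IH := IHk ltac:(lia)).
      transitivity (rsum (S m) (fun i => eta i * (w i - w m) * w i ^ k) + w m * rsum (S m) (fun i => eta i * w i ^ k)).
      { rewrite <- rsum_scal, <- rsum_plus. apply rsum_ext. intros. simpl. ring. }
      rewrite IH. simpl rsum at 1. replace (w m - w m) with 0 by ring.
      rewrite (rsum_ext m _ (fun i => e' i * w i ^ k)). rewrite He' by lia. ring.
      intros i Hi. rewrite Hlt by auto. field.
      intro H. apply (Hw i m); try lia. lra.
Qed.

Lemma in_ival_loc l r t : in_ival l r t -> locally t (in_ival l r).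
Proof.
  intros [H1 H2]. apply filter_and.
  apply (open_Rbar_gt' (Finite t) l H1).
  apply (open_Rbar_lt' (Finite t) r H2).
Qed.

Lemma in_ival_conv l r x y c : in_ival l r x -> in_ival l r y -> x <= c <= y -> in_ival l r c.
Proof.
  intros [H1 H2] [H3 H4] [H5 H6]. split.
  apply (Rbar_lt_le_trans l (Finite x) (Finite c)); auto.
  apply (Rbar_le_lt_trans (Finite c) (Finite y) r); auto.
Qed.

Lemma in_ival_ex l r : Rbar_lt l r -> exists t, in_ival l r t.
Proof.
  destruct l as [x| |], r as [y| |]; simpl; intros H; try tauto.
  - exists ((x+y)/2). split; simpl; lra.
  - exists (x+1). split; simpl; auto. lra.
  - exists (y-1). split; simpl; auto. lra.
  - exists 0. split; simpl; auto.
Qed.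

Lemma is_derive_rsum m (f : nat -> R -> R) df t :
  (forall i, (i < m)%nat -> is_derive (f i) t (df i)) ->
  is_derive (fun u => rsum m (fun i => f i u)) t (rsum m df).
Proof.
  induction m; intros H; simpl.
  - apply (is_derive_const 0 t).
  - apply (@is_derive_plus R_AbsRing R_NormedModule (fun u => rsum m (fun i => f i u)) (f m)).
    apply IHm; intros; apply H; lia. apply H; lia.
Qed.

Lemma continuous_rsum m (f : nat -> R -> R) t :
  (forall i, (i < m)%nat -> continuous (f i) t) ->
  continuous (fun u => rsum m (fun i => f i u)) t.
Proof.
  induction m; intros H; simpl.
  - apply continuous_const.
  - apply (@continuous_plus R_UniformSpace R_AbsRing R_NormedModule (fun u => rsum m (fun i => f i u)) (f m)).
    apply IHm; intros; apply H; lia. apply H; lia.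
Qed.

Lemma rsum_const m c : rsum m (fun _ => c) = INR m * c.
Proof. induction m; simpl; [ring|]. rewrite IHm. destruct m; simpl; ring. Qed.

Section Main.
Variables (n : nat) (a eps : nat -> R) (l r : Rbar).
Hypothesis Hn : (1 <= n)%nat.
Hypothesis Hdist : forall i j, (i < n)%nat -> (j < n)%nat -> i <> j -> a i <> a j.
Hypothesis Heps : forall i, (i < n)%nat -> eps i = 1 \/ eps i = -1.
Hypothesis Hpos : forall t, in_ival l r t -> forall i, (i < n)%nat -> 0 < Dlt eps a i t.

Lemma ee i : (i < n)%nat -> eps i * eps i = 1.
Proof. intros Hi. destruct (Heps i Hi) as [-> | ->]; ring. Qed.

Lemma Dpos t i : in_ival l r t -> (i < n)%nat -> 0 < eps i * (t - a i).
Proof. intros Ht Hi. apply (Hpos t Ht i Hi). Qed.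

Definition A s t := Derive_n (Fpoly n a) (n - s) t / INR (Factorial.fact (n - s)) * / poch (1/2) s.

Lemma xder (xi : nat -> R) : forall s t, in_ival l r t ->
  Derive_n (fun u => rsum n (fun i => xi i / sqrt (Dlt eps a i u))) s t
  = rsum n (fun i => xi i * gf (eps i) (a i) s t).
Proof.
  induction s; intros t Ht.
  - simpl. apply rsum_ext. intros i Hi. unfold gf, Dlt. simpl.
    assert (0 < sqrt (eps i * (t - a i))) by (apply sqrt_lt_R0, Dpos; auto).
    field. lra.
  - simpl Derive_n at 1.
    rewrite (Derive_ext_loc _ (fun u => rsum n (fun i => xi i * gf (eps i) (a i) s u))).
    2:{ eapply filter_imp; [|apply (in_ival_loc _ _ _ Ht)]. intros u Hu. apply IHs; auto. }
    apply is_derive_unique.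
    apply (is_derive_rsum n (fun i u => xi i * gf (eps i) (a i) s u)).
    intros i Hi. apply is_derive_scal. apply gf_isd. apply ee; auto. apply Dpos; auto.
Qed.

Lemma sumcore (xi : nat -> R) t : in_ival l r t ->
  rsum (S n) (fun s => A s t * rsum n (fun i => xi i * gf (eps i) (a i) s t)) = 0.
Proof.
  intros Ht.
  rewrite (rsum_ext _ _ (fun s => rsum n (fun i => xi i * (A s t * gf (eps i) (a i) s t)))).
  2:{ intros s _. rewrite <- rsum_scal. apply rsum_ext. intros; ring. }
  rewrite rsum_swap. apply rsum_zero. intros i Hi.
  rewrite rsum_scal. unfold A. rewrite core; auto. ring. apply ee; auto. apply Dpos; auto.
Qed.

Lemma rhs0 t i : in_ival l r t -> (i < n)%nat ->
  Derive_n (fun u => Fpoly n a u / Dlt eps a i u) n t = 0.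
Proof.
  intros Ht Hi.
  rewrite (Derive_n_ext_loc _ (fun u => eps i * Gi n a i u)).
  rewrite Derive_n_scal_l. rewrite Gi_high; auto. ring.
  eapply filter_imp; [|apply (in_ival_loc _ _ _ Ht)]. intros u Hu.
  rewrite (Fpoly_Gi n a i u Hi). unfold Dlt.
  assert (H := Dpos u i Hu Hi). assert (He := ee i Hi).
  assert (u - a i <> 0) by (intro Z; rewrite Z in H; lra).
  assert (eps i <> 0) by (intro Z; rewrite Z in He; lra).
  field_simplify_eq; auto. simpl. rewrite Rmult_1_r, He. ring.
Qed.

Lemma part1 (xi : nat -> R) t : in_ival l r t ->
     let x := fun u => rsum n (fun i => xi i / sqrt (Dlt eps a i u)) in
     Op n (Fpoly n a) x t
       = rsum n (fun i => xi i * sqrt (Dlt eps a i t) / INR (Factorial.fact n)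
                   * Derive_n (fun u => Fpoly n a u / Dlt eps a i u) n t)
     /\ rsum n (fun i => xi i * sqrt (Dlt eps a i t) / INR (Factorial.fact n)
                   * Derive_n (fun u => Fpoly n a u / Dlt eps a i u) n t) = 0.
Proof.
  intros Ht x.
  assert (HR : rsum n (fun i => xi i * sqrt (Dlt eps a i t) / INR (Factorial.fact n)
                   * Derive_n (fun u => Fpoly n a u / Dlt eps a i u) n t) = 0).
  { apply rsum_zero. intros i Hi. rewrite rhs0; auto. ring. }
  split; [|exact HR]. rewrite HR.
  unfold Op. change (rsum (S n) (fun s => A s t * Derive_n x s t) = 0).
  rewrite (rsum_ext _ _ (fun s => A s t * rsum n (fun i => xi i * gf (eps i) (a i) s t))).
  apply sumcore; auto.
  intros s _. unfold x. rewrite xder; auto.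
Qed.

Lemma F_nz t : in_ival l r t -> Fpoly n a t <> 0.
Proof. intros Ht. unfold Fpoly. apply rprod_nz. intros i Hi H.
  assert (Hp := Dpos t i Ht Hi). rewrite H in Hp. lra. Qed.

Lemma An_nz t : in_ival l r t -> A n t <> 0.
Proof. intros Ht. unfold A. rewrite Nat.sub_diag. simpl Derive_n. simpl Factorial.fact.
  assert (H := F_nz t Ht). assert (H2 := poch_pos n). simpl INR.
  apply Rmult_integral_contrapositive; split. lra. apply Rinv_neq_0_compat; lra. Qed.

Lemma A_exd s t : ex_derive (A s) t.
Proof.
  unfold A. apply (ex_derive_ext (fun u => (/ INR (Factorial.fact (n - s)) * / poch (1/2) s) * Derive_n (Fpoly n a) (n - s) u)).
  intros u. unfold Rdiv. rewrite Rmult_comm, Rmult_assoc. reflexivity. apply ex_derive_scal, (proj1 (Fpoly_Sm n a)).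
Qed.

Section Uniq.
Variables (y : R -> R) (xi : nat -> R) (t0 : R).
Hypothesis Hy : forall t, in_ival l r t -> forall k, (k <= n)%nat -> ex_derive_n y k t.
Hypothesis Hode : forall t, in_ival l r t -> Op n (Fpoly n a) y t = 0.
Hypothesis Ht0 : in_ival l r t0.
Hypothesis Hinit : forall s, (s < n)%nat -> Derive_n y s t0 = rsum n (fun i => xi i * gf (eps i) (a i) s t0).

Definition z s t := Derive_n y s t - rsum n (fun i => xi i * gf (eps i) (a i) s t).
Definition En t := rsum n (fun s => z s t ^ 2).
Definition En' t := rsum n (fun s => 2 * z s t * z (S s) t).
Definition Cf t := rsum n (fun s => Rabs (A s t / A n t)).

Lemma zd s t : (s < n)%nat -> in_ival l r t -> is_derive (z s) t (z (S s) t).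
Proof.
  intros Hs Ht. unfold z.
  apply (@is_derive_minus R_AbsRing R_NormedModule (Derive_n y s) (fun u => rsum n (fun i => xi i * gf (eps i) (a i) s u))).
  - simpl Derive_n at 2. apply Derive_correct. apply (Hy t Ht (S s)). lia.
  - apply (is_derive_rsum n (fun i u => xi i * gf (eps i) (a i) s u)).
    intros i Hi. apply is_derive_scal. apply gf_isd. apply ee; auto. apply Dpos; auto.
Qed.

Lemma zode t : in_ival l r t -> rsum (S n) (fun s => A s t * z s t) = 0.
Proof.
  intros Ht. unfold z.
  rewrite (rsum_ext _ _ (fun s => A s t * Derive_n y s t + (-1) * (A s t * rsum n (fun i => xi i * gf (eps i) (a i) s t)))) by (intros; ring).
  rewrite rsum_plus, rsum_scal, sumcore; auto.
  change (rsum (S n) (fun s => A s t * Derive_n y s t)) with (Op n (Fpoly n a) y t).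
  rewrite Hode; auto. ring.
Qed.

Lemma zn t : in_ival l r t -> z n t = - rsum n (fun s => A s t / A n t * z s t).
Proof.
  intros Ht. assert (H := zode t Ht). simpl in H. assert (H2 := An_nz t Ht).
  rewrite (rsum_ext _ _ (fun s => / A n t * (A s t * z s t))) by (intros; unfold Rdiv; ring).
  rewrite rsum_scal. field_simplify_eq; auto. lra.
Qed.

Lemma Ed t : in_ival l r t -> is_derive En t (En' t).
Proof.
  intros Ht. unfold En, En'.
  apply (is_derive_rsum n (fun s u => z s u ^ 2)). intros s Hs.
  eapply isd_eq. apply is_derive_pow. apply zd; auto. simpl; ring.
Qed.

Lemma En_nonneg t : 0 <= En t.
Proof. unfold En. apply rsum_nonneg. intros. apply pow2_ge_0. Qed.

Lemma Cf_nonneg t : 0 <= Cf t.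
Proof. unfold Cf. apply rsum_nonneg. intros. apply Rabs_pos. Qed.

Lemma z_le s t : (s < n)%nat -> Rabs (z s t) <= sqrt (En t).
Proof.
  intros Hs. rewrite <- sqrt_Rsqr_abs. apply sqrt_le_1_alt. unfold Rsqr.
  replace (z s t * z s t) with (z s t ^ 2) by ring.
  unfold En. apply (rsum_term n (fun s => z s t ^ 2)); auto. intros; apply pow2_ge_0.
Qed.

Lemma zn_le t : in_ival l r t -> Rabs (z n t) <= Cf t * sqrt (En t).
Proof.
  intros Ht. rewrite zn; auto. rewrite Rabs_Ropp.
  eapply Rle_trans. apply rsum_abs. unfold Cf. rewrite Rmult_comm, <- rsum_scal.
  apply rsum_le. intros s Hs. rewrite Rabs_mult.
  rewrite Rmult_comm. apply Rmult_le_compat_r. apply Rabs_pos. apply z_le; auto.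
Qed.

Lemma Cb t : in_ival l r t -> Rabs (En' t) <= 2 * INR n * (1 + Cf t) * En t.
Proof.
  intros Ht. unfold En'. eapply Rle_trans. apply rsum_abs.
  assert (HE : sqrt (En t) * sqrt (En t) = En t) by (apply sqrt_sqrt, En_nonneg).
  assert (HC := Cf_nonneg t). assert (HS := sqrt_pos (En t)).
  eapply Rle_trans. apply (rsum_le _ _ (fun _ => 2 * (1 + Cf t) * En t)).
  - intros s Hs. rewrite !Rabs_mult. rewrite Rabs_right by lra.
    assert (H1 := z_le s t Hs).
    assert (H2 : Rabs (z (S s) t) <= (1 + Cf t) * sqrt (En t)).
    { destruct (Nat.eq_dec (S s) n) as [E|E].
      - rewrite E. eapply Rle_trans. apply zn_le; auto. nra.
      - eapply Rle_trans. apply z_le. lia. nra. }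
    rewrite <- HE. assert (0 <= Rabs (z s t)) by apply Rabs_pos.
    assert (0 <= Rabs (z (S s) t)) by apply Rabs_pos.
    assert (Rabs (z s t) * Rabs (z (S s) t) <= sqrt (En t) * ((1 + Cf t) * sqrt (En t))).
    { apply Rmult_le_compat; auto. }
    nra.
  - rewrite rsum_const. lra.
Qed.

Lemma Ccont t : in_ival l r t -> continuity_pt Cf t.
Proof.
  intros Ht. apply continuity_pt_filterlim. unfold Cf.
  apply (continuous_rsum n (fun s u => Rabs (A s u / A n u))). intros s Hs.
  apply (continuous_Rabs_comp (fun u => A s u / A n u)). apply (@ex_derive_continuous R_AbsRing R_NormedModule (fun u => A s u / A n u)).
  apply ex_derive_div. apply A_exd. apply A_exd. apply An_nz; auto.
Qed.

Lemma phi_isd q x : in_ival l r x ->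
  is_derive (fun u => En u * exp (q * u)) x (En' x * exp (q * x) + En x * (q * exp (q * x))).
Proof.
  intros Hx.
  eapply isd_eq.
  apply (is_derive_mult En (fun u => exp (q * u))). apply Ed; auto.
  2: exact Rmult_comm.
  instantiate (1 := q * exp (q * x)). auto_derive; auto. ring.
  unfold plus, mult; simpl. ring.
Qed.

Lemma phi_cont q x : in_ival l r x -> continuity_pt (fun u => En u * exp (q * u)) x.
Proof.
  intros Hx. apply continuity_pt_filterlim. apply (@ex_derive_continuous R_AbsRing R_NormedModule (fun u => En u * exp (q * u))).
  eexists. apply phi_isd; auto.
Qed.

Lemma E0 : En t0 = 0.
Proof. unfold En. apply rsum_zero. intros s Hs. unfold z. rewrite Hinit; auto. ring. Qed.

Lemma Ezero t : in_ival l r t -> En t = 0.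
Proof.
  intros Ht.
  assert (Hseg : forall c, Rmin t0 t <= c <= Rmax t0 t -> in_ival l r c).
  { intros c Hc. destruct (Rle_dec t0 t).
    - rewrite Rmin_left, Rmax_right in Hc by lra. apply (in_ival_conv l r t0 t); auto.
    - rewrite Rmin_right, Rmax_left in Hc by lra. apply (in_ival_conv l r t t0); auto. }
  destruct (continuity_ab_maj Cf (Rmin t0 t) (Rmax t0 t)) as [Mx [HMx _]].
  { apply Rle_trans with t0. apply Rmin_l. apply Rmax_l. }
  { intros c Hc. apply Ccont; auto. }
  set (K := Cf Mx) in *. set (L := 2 * INR n * (1 + K)).
  assert (HnR : 0 <= INR n) by apply pos_INR.
  assert (Hb : forall c, Rmin t0 t <= c <= Rmax t0 t -> Rabs (En' c) <= L * En c).
  { intros c Hc. eapply Rle_trans. apply Cb; auto.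
    assert ((1 + Cf c) * En c <= (1 + K) * En c).
    { apply Rmult_le_compat_r. apply En_nonneg. assert (Cf c <= K) by auto. lra. }
    unfold L. replace (2 * INR n * (1 + Cf c) * En c) with (2 * INR n * ((1 + Cf c) * En c)) by ring.
    replace (2 * INR n * (1 + K) * En c) with (2 * INR n * ((1 + K) * En c)) by ring.
    apply Rmult_le_compat_l; lra. }
  assert (HEt := En_nonneg t). assert (HE0 := E0).
  destruct (Rle_dec t0 t).
  - destruct (MVT_gen (fun u => En u * exp (- L * u)) t0 t
      (fun u => En' u * exp (- L * u) + En u * (- L * exp (- L * u)))) as [c [Hc Heq]].
    + intros x Hx. apply phi_isd. apply Hseg; lra.
    + intros x Hx. apply phi_cont. apply Hseg; lra.
    + rewrite HE0 in Heq. simpl in Heq.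
      assert (Hbc := Hb c Hc). apply Rabs_le_between in Hbc.
      assert (Hex := exp_pos (-L * c)). assert (Hext := exp_pos (-L * t)).
      assert (HEc := En_nonneg c).
      rewrite Rmin_left, Rmax_right in Hc by lra.
      assert (En' c * exp (- L * c) + En c * (- L * exp (- L * c)) <= 0).
      { replace (En' c * exp (- L * c) + En c * (- L * exp (- L * c))) with ((En' c - L * En c) * exp (-L * c)) by ring.
        apply Rmult_le_0_r; lra. }
      assert (En t * exp (- L * t) <= 0) by nra.
      nra.
  - destruct (MVT_gen (fun u => En u * exp (L * u)) t t0
      (fun u => En' u * exp (L * u) + En u * (L * exp (L * u)))) as [c [Hc Heq]].
    + intros x Hx. apply phi_isd. apply Hseg. rewrite Rmin_comm, Rmax_comm. lra.
    + intros x Hx. apply phi_cont. apply Hseg. rewrite Rmin_comm, Rmax_comm. lra.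
    + rewrite HE0 in Heq.
      assert (Hc' : Rmin t0 t <= c <= Rmax t0 t) by (rewrite Rmin_comm, Rmax_comm; lra).
      assert (Hbc := Hb c Hc'). apply Rabs_le_between in Hbc.
      assert (Hex := exp_pos (L * c)). assert (Hext := exp_pos (L * t)).
      assert (HEc := En_nonneg c).
      rewrite Rmin_left, Rmax_right in Hc by lra.
      assert (0 <= En' c * exp (L * c) + En c * (L * exp (L * c))).
      { replace (En' c * exp (L * c) + En c * (L * exp (L * c))) with ((En' c + L * En c) * exp (L * c)) by ring.
        apply Rmult_le_pos; lra. }
      assert (En t * exp (L * t) <= 0) by nra.
      nra.
Qed.

Lemma y_eq t : in_ival l r t -> y t = rsum n (fun i => xi i / sqrt (Dlt eps a i t)).
Proof.
  intros Ht.
  assert (H := z_le 0 t ltac:(lia)). rewrite Ezero, sqrt_0 in H; auto.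
  assert (Hz : z 0 t = 0) by (pose proof (Rabs_pos (z 0 t)); apply Rabs_eq_0; lra).
  unfold z in Hz. simpl Derive_n in Hz.
  assert (y t = rsum n (fun i => xi i * gf (eps i) (a i) 0 t)) by lra. rewrite H0.
  apply rsum_ext. intros i Hi. unfold gf, Dlt. simpl.
  assert (0 < sqrt (eps i * (t - a i))) by (apply sqrt_lt_R0, Dpos; auto).
  field. lra.
Qed.

End Uniq.

Lemma part2 (Hlr : Rbar_lt l r) (y : R -> R) :
  (forall t, in_ival l r t -> forall k, (k <= n)%nat -> ex_derive_n y k t) ->
  (forall t, in_ival l r t -> Op n (Fpoly n a) y t = 0) ->
  exists xi : nat -> R, forall t, in_ival l r t ->
    y t = rsum n (fun i => xi i / sqrt (Dlt eps a i t)).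
Proof.
  intros Hy Hode.
  destruct (in_ival_ex l r Hlr) as [t0 Ht0].
  set (w := fun i => - eps i / Dlt eps a i t0).
  set (u := fun k => Derive_n y k t0 / poch (1/2) k).
  assert (Hw : forall i, (i < n)%nat -> w i = - / (t0 - a i)).
  { intros i Hi. unfold w, Dlt. assert (H := Dpos t0 i Ht0 Hi). assert (He := ee i Hi).
    assert (t0 - a i <> 0) by (intro Z; rewrite Z in H; lra).
    assert (eps i <> 0) by (intro Z; rewrite Z in He; lra). field; auto. }
  destruct (vander n w u) as [eta Heta].
  { intros i j Hi Hj Hij E. rewrite !Hw in E by auto.
    apply (Hdist i j Hi Hj Hij). apply Ropp_eq_compat in E. rewrite !Ropp_involutive in E.
    apply Rinv_eq_reg in E. lra. }
  exists (fun i => eta i * sqrt (Dlt eps a i t0)).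
  intros t Ht. apply (y_eq y _ t0 Hy Hode Ht0); auto.
  intros s Hs.
  rewrite (rsum_ext _ _ (fun i => poch (1/2) s * (eta i * w i ^ s))).
  - rewrite rsum_scal, Heta by auto. unfold u. assert (H := poch_pos s). field. lra.
  - intros i Hi. unfold w, gf, Dlt.
    assert (H := Dpos t0 i Ht0 Hi).
    assert (0 < sqrt (eps i * (t0 - a i))) by (apply sqrt_lt_R0; auto).
    assert (0 < (eps i * (t0 - a i)) ^ s) by (apply pow_lt; auto).
    unfold Rdiv. rewrite (Rpow_mult_distr (- eps i) (/ (eps i * (t0 - a i)))), pow_inv. field. lra.
Qed.

End Main.

Theorem proposition6
  (n : nat) (a eps : nat -> R) (l r : Rbar)
  (Hn : (1 <= n)%nat)
  (Hdist : forall i j, (i < n)%nat -> (j < n)%nat -> i <> j -> a i <> a j)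
  (Heps : forall i, (i < n)%nat -> eps i = 1 \/ eps i = -1)
  (Hlr : Rbar_lt l r)
  (Hpos : forall t, in_ival l r t -> forall i, (i < n)%nat -> 0 < Dlt eps a i t) :
  (forall xi : nat -> R, forall t, in_ival l r t ->
     let x := fun u => rsum n (fun i => xi i / sqrt (Dlt eps a i u)) in
     Op n (Fpoly n a) x t
       = rsum n (fun i => xi i * sqrt (Dlt eps a i t) / INR (Factorial.fact n)
                   * Derive_n (fun u => Fpoly n a u / Dlt eps a i u) n t)
     /\ rsum n (fun i => xi i * sqrt (Dlt eps a i t) / INR (Factorial.fact n)
                   * Derive_n (fun u => Fpoly n a u / Dlt eps a i u) n t) = 0)
  /\
  (forall y : R -> R,
     (forall t, in_ival l r t -> forall k, (k <= n)%nat -> ex_derive_n y k t) ->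
     (forall t, in_ival l r t -> Op n (Fpoly n a) y t = 0) ->
     exists xi : nat -> R, forall t, in_ival l r t ->
       y t = rsum n (fun i => xi i / sqrt (Dlt eps a i t))).
Proof.
  split.
  - intros xi t Ht. apply (part1 n a eps l r Heps Hpos xi t Ht).
  - intros y Hy Hode. apply (part2 n a eps l r Hn Hdist Heps Hpos Hlr y Hy Hode).
Qed.
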